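(* Let $h:\mathbb R\to\mathbb R$ be twice differentiable and satisfy: (i) $h''$ has finitely many zeros $\xi_1,\dots,\xi_n$, each of order at most $q_1>0$. That is, for each $k$ there are $a_k>0$ and a neighborhood of $\xi_k$ on which $|h''(\xi)|\ge a_k|\xi-\xi_k|^{q_1}$. (ii) There are constants $C_1,C_2>0$ and $q_2\ge0$ such that $|h''(\xi)|\ge C_2|\xi|^{q_2}$ whenever $|\xi|\ge C_1$. Then there is a constant $C$ such that the (improper) integral satisfies $$\Big|\int_{\mathbb R}e^{ith(\xi)}\,d\xi\Big|\le Ct^{-1/(2+q_2)}\quad (0<t<1),\qquad \Big|\int_{\mathbb R}e^{ith(\xi)}\,d\xi\Big|\le Ct^{-1/(2+q_1)}\quad (t\ge1).$$ *)

(* Defs.v *)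
From Stdlib Require Import Reals List.
Open Scope R_scope.

(* Nonnegative real power, with the convention 0 ^ q = 0 (used for q > 0). *)
Definition rpow (x q : R) : R := if Req_EM_T x 0 then 0 else Rpower x q.

Definition is_integral (f : R -> R) (a b v : R) : Prop :=
  exists pr : Riemann_integrable f a b, RiemannInt pr = v.

Definition improper_integral_R (f : R -> R) (I : R) : Prop :=
  forall eps, eps > 0 -> exists M, forall a b, a >= M -> b >= M ->
    exists v, is_integral f (- a) b v /\ Rabs (v - I) < eps.

(* |int_R e^{i t h}| as the modulus of (int cos(t h), int sin(t h)),
   the improper integral existing. *)
Definition osc_integral_bound (h : R -> R) (t B : R) : Prop :=
  exists Ic Is,
    improper_integral_R (fun x => cos (t * h x)) Ic /\
    improper_integral_R (fun x => sin (t * h x)) Is /\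
    sqrt (Ic ^ 2 + Is ^ 2) <= B.

(* Main.v *)
Require Import Defs.
From Stdlib Require Import Reals List Lra Lia Classical.
From Coquelicot Require Import Coquelicot.
Open Scope R_scope.


Definition D2 (g g1 g2 : R -> R) :=
  (forall x, is_derive g x (g1 x)) /\ (forall x, is_derive g1 x (g2 x)).

Definition Bnd (g : R -> R) (a b t B : R) :=
  Rabs (RInt (fun x => cos (t * g x)) a b) <= B /\
  Rabs (RInt (fun x => sin (t * g x)) a b) <= B.

Lemma D2_of (g g1 g2 : R -> R) :
  (forall x, derivable_pt_lim g x (g1 x)) ->
  (forall x, derivable_pt_lim g1 x (g2 x)) -> D2 g g1 g2.
Proof. intros H1 H2; split; intro x; apply is_derive_Reals; auto. Qed.

Lemma der_contpt (f : R -> R) x l : is_derive f x l -> continuity_pt f x.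
Proof.
  intro H; apply is_derive_Reals in H.
  apply derivable_continuous_pt. exists l; auto.
Qed.
Lemma der_cont (f : R -> R) x l : is_derive f x l -> continuous f x.
Proof. intro H; apply continuity_pt_filterlim; eapply der_contpt; eauto. Qed.

Lemma D2_cont g g1 g2 : D2 g g1 g2 -> forall x, continuous g x /\ continuous g1 x.
Proof.
  intros [H1 H2] x; split; eapply der_cont; eauto.
Qed.

Lemma D2_contpt g g1 g2 : D2 g g1 g2 -> forall x, continuity_pt g x /\ continuity_pt g1 x.
Proof.
  intros [H1 H2] x; split; eapply der_contpt; eauto.
Qed.

Lemma cos_der g g1 g2 t : D2 g g1 g2 -> forall x,
  is_derive (fun y => cos (t * g y)) x (- sin (t * g x) * (t * g1 x)).
Proof.
  intros [H1 _] x.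
  assert (Hd : is_derive (fun y => t * g y) x (t * g1 x)) by (apply is_derive_scal; auto).
  pose proof (is_derive_comp cos (fun y => t * g y) x _ _ (is_derive_cos _) Hd) as K.
  replace (- sin (t * g x) * (t * g1 x)) with (scal (t * g1 x) (- sin (t * g x))).
  exact K. unfold scal; simpl; unfold mult; simpl; ring.
Qed.

Lemma sin_der g g1 g2 t : D2 g g1 g2 -> forall x,
  is_derive (fun y => sin (t * g y)) x (cos (t * g x) * (t * g1 x)).
Proof.
  intros [H1 _] x.
  assert (Hd : is_derive (fun y => t * g y) x (t * g1 x)) by (apply is_derive_scal; auto).
  pose proof (is_derive_comp sin (fun y => t * g y) x _ _ (is_derive_sin _) Hd) as K.
  replace (cos (t * g x) * (t * g1 x)) with (scal (t * g1 x) (cos (t * g x))).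
  exact K. unfold scal; simpl; unfold mult; simpl; ring.
Qed.

Lemma cos_cont g g1 g2 t : D2 g g1 g2 -> forall x, continuous (fun y => cos (t * g y)) x.
Proof. intros H x; eapply der_cont; apply (cos_der g g1 g2 t H). Qed.
Lemma sin_cont g g1 g2 t : D2 g g1 g2 -> forall x, continuous (fun y => sin (t * g y)) x.
Proof. intros H x; eapply der_cont; apply (sin_der g g1 g2 t H). Qed.

Lemma cos_ex g g1 g2 t : D2 g g1 g2 -> forall a b, ex_RInt (fun y => cos (t * g y)) a b.
Proof. intros H a b; apply (ex_RInt_continuous (V:=R_CompleteNormedModule)); intros; eapply cos_cont; eauto. Qed.
Lemma sin_ex g g1 g2 t : D2 g g1 g2 -> forall a b, ex_RInt (fun y => sin (t * g y)) a b.
Proof. intros H a b; apply (ex_RInt_continuous (V:=R_CompleteNormedModule)); intros; eapply sin_cont; eauto. Qed.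

Lemma Chasles_R (f : R -> R) a b c : ex_RInt f a b -> ex_RInt f b c ->
  RInt f a c = RInt f a b + RInt f b c.
Proof. intros; rewrite <- (RInt_Chasles f a b c); auto. Qed.

Lemma Bnd_chasles g g1 g2 a b c t B1 B2 : D2 g g1 g2 ->
  Bnd g a b t B1 -> Bnd g b c t B2 -> Bnd g a c t (B1 + B2).
Proof.
  intros H [A1 A2] [B3 B4]; split.
  - rewrite (Chasles_R _ a b c) by (eapply cos_ex; eauto).
    eapply Rle_trans; [apply Rabs_triang|lra].
  - rewrite (Chasles_R _ a b c) by (eapply sin_ex; eauto).
    eapply Rle_trans; [apply Rabs_triang|lra].
Qed.

Lemma Bnd_mono g a b t B B' : B <= B' -> Bnd g a b t B -> Bnd g a b t B'.
Proof. intros Hl [A1 A2]; split; lra. Qed.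

Lemma Bnd_triv g g1 g2 a b t : D2 g g1 g2 -> a <= b -> Bnd g a b t (b - a).
Proof.
  intros H Hab; split.
  - replace (b - a) with ((b - a) * 1) by ring.
    apply abs_RInt_le_const; auto. eapply cos_ex; eauto.
    intros; apply Rabs_le; pose proof (COS_bound (t * g t0)); lra.
  - replace (b - a) with ((b - a) * 1) by ring.
    apply abs_RInt_le_const; auto. eapply sin_ex; eauto.
    intros; apply Rabs_le; pose proof (SIN_bound (t * g t0)); lra.
Qed.

Lemma Bnd_point g a t : Bnd g a a t 0.
Proof.
  split; rewrite RInt_point; unfold zero; simpl; rewrite Rabs_R0; lra.
Qed.

Lemma is_derive_neg (f : R -> R) x l : is_derive f x l -> is_derive (fun y => - f y) x (- l).
Proof.
  intro H. pose proof (is_derive_scal f x (-1) l H) as K.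
  eapply is_derive_ext. 2: { replace (- l) with (-1 * l) by ring; exact K. }
  intros; simpl; ring.
Qed.

Lemma is_derive_refl (f : R -> R) x l : is_derive f (- x) l -> is_derive (fun y => f (- y)) x (- l).
Proof.
  intro H. apply is_derive_Reals in H. apply is_derive_Reals.
  assert (K : derivable_pt_lim (fun y => - y) x (-1)).
  { replace (-1) with (- (1)) by ring. apply (derivable_pt_lim_opp id x 1). apply derivable_pt_lim_id. }
  pose proof (derivable_pt_lim_comp (fun y => - y) f x (-1) l K H) as K2.
  replace (- l) with (l * -1) by ring. exact K2.
Qed.

Lemma D2_neg g g1 g2 : D2 g g1 g2 ->
  D2 (fun x => - g x) (fun x => - g1 x) (fun x => - g2 x).
Proof.
  intros [H1 H2]; split; intro x; apply is_derive_neg; auto.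
Qed.

Lemma Bnd_neg g g1 g2 a b t B : D2 g g1 g2 -> Bnd (fun x => - g x) a b t B -> Bnd g a b t B.
Proof.
  intros H [A1 A2]; split.
  - erewrite RInt_ext in A1. exact A1. intros; simpl.
    rewrite <- Ropp_mult_distr_r, cos_neg; auto.
  - erewrite RInt_ext in A2.
    2:{ intros; simpl. rewrite <- Ropp_mult_distr_r, sin_neg. reflexivity. }
    rewrite (RInt_opp (fun x => sin (t * g x))) in A2 by (eapply sin_ex; eauto).
    unfold opp in A2; simpl in A2. rewrite Rabs_Ropp in A2; auto.
Qed.

Lemma D2_refl g g1 g2 : D2 g g1 g2 ->
  D2 (fun x => g (- x)) (fun x => - g1 (- x)) (fun x => g2 (- x)).
Proof.
  intros [H1 H2]; split; intro x.
  - apply is_derive_refl; auto.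
  - replace (g2 (- x)) with (- - g2 (- x)) by ring.
    apply (is_derive_neg (fun y => g1 (- y))).
    apply is_derive_refl; auto.
Qed.

Lemma RInt_refl (f : R -> R) a b : ex_RInt f a b -> ex_RInt (fun x => f (- x)) (- b) (- a) ->
  RInt (fun x => f (- x)) (- b) (- a) = RInt f a b.
Proof.
  intros H H'.
  assert (E := RInt_comp_lin f (-1) 0 (- b) (- a)).
  replace (-1 * - b + 0) with b in E by ring.
  replace (-1 * - a + 0) with a in E by ring.
  specialize (E (ex_RInt_swap _ _ _ H)).
  rewrite (RInt_ext _ (fun y => scal (-1) (f (- y)))) in E.
  2:{ intros; f_equal; f_equal; ring. }
  rewrite (RInt_scal (V:=R_CompleteNormedModule) (fun y => f (- y))) in E by auto.
  rewrite <- (opp_RInt_swap (V:=R_CompleteNormedModule) f) in E by auto.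
  unfold scal, opp in E; simpl in E; unfold mult in E; simpl in E. lra.
Qed.

Lemma Bnd_refl g g1 g2 a b t B : D2 g g1 g2 ->
  Bnd (fun x => g (- x)) (- b) (- a) t B -> Bnd g a b t B.
Proof.
  intros H [A1 A2]; pose proof (D2_refl _ _ _ H) as H'; split.
  - rewrite (RInt_refl (fun x => cos (t * g x))) in A1; auto.
    eapply cos_ex; eauto. apply (cos_ex _ _ _ t H').
  - rewrite (RInt_refl (fun x => sin (t * g x))) in A2; auto.
    eapply sin_ex; eauto. apply (sin_ex _ _ _ t H').
Qed.


Lemma mvt1 g g1 g2 : D2 g g1 g2 -> forall x y, x <= y ->
  exists c, x <= c <= y /\ g1 y - g1 x = g2 c * (y - x).
Proof.
  intros [H1 H2] x y Hxy.
  destruct (MVT_gen g1 x y g2) as [c [Hc E]].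
  - intros; apply H2.
  - intros; eapply der_contpt; apply H2.
  - exists c; split; auto. rewrite Rmin_left in Hc by auto. rewrite Rmax_right in Hc by auto. auto.
Qed.

Lemma mvt0 g g1 g2 : D2 g g1 g2 -> forall x y, x <= y ->
  exists c, x <= c <= y /\ g y - g x = g1 c * (y - x).
Proof.
  intros [H1 H2] x y Hxy.
  destruct (MVT_gen g x y g1) as [c [Hc E]].
  - intros; apply H1.
  - intros; eapply der_contpt; apply H1.
  - exists c; split; auto. rewrite Rmin_left in Hc by auto. rewrite Rmax_right in Hc by auto. auto.
Qed.

Lemma mono1 g g1 g2 a b : D2 g g1 g2 -> (forall z, a <= z <= b -> 0 <= g2 z) ->
  forall x y, a <= x -> x <= y -> y <= b -> g1 x <= g1 y.
Proof.
  intros H Hp x y Hax Hxy Hyb. destruct (mvt1 _ _ _ H x y Hxy) as [c [Hc E]].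
  assert (0 <= g2 c) by (apply Hp; lra).
  assert (0 <= g2 c * (y - x)) by (apply Rmult_le_pos; lra). lra.
Qed.

Lemma deriv_pos_right (f : R -> R) x l : derivable_pt_lim f x l -> l > 0 ->
  forall y, x < y -> exists s, x < s <= y /\ f s > f x.
Proof.
  intros H Hl y Hy. destruct (H l Hl) as [d Hd].
  set (h := Rmin (d / 2) (y - x)).
  assert (hp : 0 < h) by (unfold h; apply Rmin_pos; pose proof (cond_pos d); lra).
  assert (hd : h < d) by (unfold h; pose proof (Rmin_l (d/2) (y-x)); pose proof (cond_pos d); lra).
  assert (hy : h <= y - x) by (unfold h; apply Rmin_r).
  specialize (Hd h (Rgt_not_eq _ _ hp)). rewrite Rabs_pos_eq in Hd by lra.
  specialize (Hd hd). apply Rabs_def2 in Hd. destruct Hd as [_ Hd].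
  exists (x + h); split; [lra|].
  assert (0 < (f (x + h) - f x) / h) by lra.
  assert (0 < (f (x + h) - f x) / h * h) by (apply Rmult_lt_0_compat; lra).
  replace ((f (x + h) - f x) / h * h) with (f (x + h) - f x) in H1 by (field; lra). lra.
Qed.

Lemma deriv_neg_left (f : R -> R) x l : derivable_pt_lim f x l -> l < 0 ->
  forall y, y < x -> exists s, y <= s < x /\ f s > f x.
Proof.
  intros H Hl y Hy. destruct (H (- l) ltac:(lra)) as [d Hd].
  set (h := Rmin (d / 2) (x - y)).
  assert (hp : 0 < h) by (unfold h; apply Rmin_pos; pose proof (cond_pos d); lra).
  assert (hd : h < d) by (unfold h; pose proof (Rmin_l (d/2) (x-y)); pose proof (cond_pos d); lra).
  assert (hy : h <= x - y) by (unfold h; apply Rmin_r).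
  specialize (Hd (- h) ltac:(lra)). rewrite Rabs_Ropp, Rabs_pos_eq in Hd by lra.
  specialize (Hd hd). apply Rabs_def2 in Hd. destruct Hd as [Hd _].
  exists (x - h); split; [lra|].
  replace (x + - h) with (x - h) in Hd by ring.
  assert ((f (x - h) - f x) / (- h) < 0) by lra.
  assert (0 < - ((f (x - h) - f x) / (- h)) * h) by (apply Rmult_lt_0_compat; lra).
  replace (- ((f (x - h) - f x) / (- h)) * h) with ((f (x - h) - f x)) in H1 by (field; lra). lra.
Qed.

Lemma darboux1 (f f' : R -> R) : (forall x, is_derive f x (f' x)) ->
  forall x y, x < y -> f' x > 0 -> f' y < 0 -> exists c, x < c < y /\ f' c = 0.
Proof.
  intros Hd x y Hxy Hx Hy.
  destruct (continuity_ab_maj f x y ltac:(lra)) as [M [HM HMr]].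
  { intros; eapply der_contpt; apply Hd. }
  assert (Mx : M <> x).
  { intro E; subst M. destruct (deriv_pos_right f x (f' x) (proj1 (is_derive_Reals _ _ _) (Hd x)) Hx y Hxy) as [s [Hs Hfs]].
    specialize (HM s ltac:(lra)); lra. }
  assert (My : M <> y).
  { intro E; subst M. destruct (deriv_neg_left f y (f' y) (proj1 (is_derive_Reals _ _ _) (Hd y)) Hy x Hxy) as [s [Hs Hfs]].
    specialize (HM s ltac:(lra)); lra. }
  exists M; split; [lra|].
  assert (L : derivable_pt_lim f M (f' M)) by (apply is_derive_Reals; auto).
  pose (pr := exist _ (f' M) L : derivable_pt f M).
  assert (E := deriv_maximum f x y M pr ltac:(lra) ltac:(lra) (fun z h1 h2 => HM z ltac:(lra))).
  rewrite (derive_pt_eq_0 f M (f' M) pr L) in E. auto.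
Qed.

Lemma darboux2 (f f' : R -> R) : (forall x, is_derive f x (f' x)) ->
  forall x y, x < y -> f' x < 0 -> f' y > 0 -> exists c, x < c < y /\ f' c = 0.
Proof.
  intros Hd x y Hxy Hx Hy.
  destruct (darboux1 (fun z => - f z) (fun z => - f' z)) with x y as [c [Hc E]]; auto.
  intro; apply is_derive_neg; auto. lra. lra.
  exists c; split; auto; lra.
Qed.

Lemma sign_const (f f' : R -> R) : (forall x, is_derive f x (f' x)) ->
  forall u v, u <= v -> (forall z, u <= z <= v -> f' z <> 0) ->
  (forall z, u <= z <= v -> f' z > 0) \/ (forall z, u <= z <= v -> f' z < 0).
Proof.
  intros Hd u v Huv Hnz.
  destruct (Rlt_or_le 0 (f' u)) as [Hp|Hn].
  - left; intros z Hz. destruct (Rlt_or_le 0 (f' z)) as [|Hz2]; auto.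
    assert (f' z < 0) by (pose proof (Hnz z Hz); lra).
    destruct (Req_dec u z) as [E|Ne]. subst; lra.
    destruct (darboux1 f f' Hd u z ltac:(lra) Hp H) as [c [Hc Ec]].
    exfalso; apply (Hnz c); auto; lra.
  - assert (Hu : f' u < 0) by (pose proof (Hnz u ltac:(lra)); lra).
    right; intros z Hz. destruct (Rlt_or_le (f' z) 0) as [|Hz2]; auto.
    assert (f' z > 0) by (pose proof (Hnz z Hz); lra).
    destruct (Req_dec u z) as [E|Ne]. subst; lra.
    destruct (darboux2 f f' Hd u z ltac:(lra) Hu H) as [c [Hc Ec]].
    exfalso; apply (Hnz c); auto; lra.
Qed.


Lemma is_derive_plusR (f g : R -> R) x df dg : is_derive f x df -> is_derive g x dg ->
  is_derive (fun y => f y + g y) x (df + dg).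
Proof.
  intros A B; apply is_derive_Reals; apply is_derive_Reals in A; apply is_derive_Reals in B.
  apply (derivable_pt_lim_plus f g x df dg A B).
Qed.
Lemma is_derive_minusR (f g : R -> R) x df dg : is_derive f x df -> is_derive g x dg ->
  is_derive (fun y => f y - g y) x (df - dg).
Proof.
  intros A B; apply is_derive_Reals; apply is_derive_Reals in A; apply is_derive_Reals in B.
  apply (derivable_pt_lim_minus f g x df dg A B).
Qed.

Lemma incr_deriv (F dF : R -> R) a b : a <= b ->
  (forall x, a <= x <= b -> is_derive F x (dF x)) -> (forall x, a <= x <= b -> 0 <= dF x) ->
  F a <= F b.
Proof.
  intros Hab Hd Hp. destruct (MVT_gen F a b dF) as [c [Hc E]].
  - intros x Hx. rewrite Rmin_left in Hx by auto. rewrite Rmax_right in Hx by auto. apply Hd; lra.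
  - intros x Hx. rewrite Rmin_left in Hx by auto. rewrite Rmax_right in Hx by auto.
    eapply der_contpt; apply Hd; lra.
  - rewrite Rmin_left in Hc by auto. rewrite Rmax_right in Hc by auto.
    assert (0 <= dF c * (b - a)) by (apply Rmult_le_pos; [apply Hp; lra|lra]). lra.
Qed.

Lemma core (F G dF dG : R -> R) a b : a <= b ->
  (forall x, a <= x <= b -> is_derive F x (dF x)) ->
  (forall x, a <= x <= b -> is_derive G x (dG x)) ->
  (forall x, a <= x <= b -> Rabs (dF x) <= dG x) ->
  Rabs (F b - F a) <= G b - G a.
Proof.
  intros Hab HF HG Hle.
  assert (A := incr_deriv (fun x => G x - F x) (fun x => dG x - dF x) a b Hab).
  assert (B := incr_deriv (fun x => G x + F x) (fun x => dG x + dF x) a b Hab).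
  simpl in A, B.
  assert (A' : G a - F a <= G b - F b).
  { apply A. intros; apply is_derive_minusR; auto.
    intros x Hx; pose proof (Hle x Hx); pose proof (Rle_abs (dF x)); lra. }
  assert (B' : G a + F a <= G b + F b).
  { apply B. intros; apply is_derive_plusR; auto.
    intros x Hx; pose proof (Hle x Hx); pose proof (Rle_abs (- dF x)); rewrite Rabs_Ropp in *; lra. }
  apply Rabs_le; lra.
Qed.

Lemma div_bound s w m : Rabs s <= 1 -> 0 < m -> m <= Rabs w -> Rabs (s / w) <= 1 / m.
Proof.
  intros Hs Hm Hw. assert (Hw0 : w <> 0) by (intro E; subst; rewrite Rabs_R0 in Hw; lra).
  unfold Rdiv; rewrite Rabs_mult, Rabs_inv.
  apply Rle_trans with (1 * / Rabs w).
  apply Rmult_le_compat_r; [left; apply Rinv_0_lt_compat; lra| lra].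
  rewrite !Rmult_1_l. apply Rinv_le_contravar; lra.
Qed.

Lemma RInt_derive (f : R -> R) a x : (forall u v, ex_RInt f u v) -> continuous f x ->
  is_derive (fun y => RInt f a y) x (f x).
Proof.
  intros He Hc. apply (is_derive_RInt (V:=R_CompleteNormedModule) f (fun y => RInt f a y) a x); auto.
  exists (mkposreal 1 Rlt_0_1); intros; apply (RInt_correct (V:=R_CompleteNormedModule)); auto.
Qed.

Lemma RInt_aa (f : R -> R) a : RInt f a a = 0.
Proof. rewrite RInt_point; reflexivity. Qed.

Lemma L1 g g1 g2 a b t d : D2 g g1 g2 -> a <= b -> 0 < t -> 0 < d ->
  (forall x, a <= x <= b -> 0 <= g2 x) -> (forall x, a <= x <= b -> d <= Rabs (g1 x)) ->
  Bnd g a b t (4 / (t * d)).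
Proof.
  intros HD Hab Ht Hd Hp Hl.
  assert (Htd : 0 < t * d) by (apply Rmult_lt_0_compat; auto).
  assert (Hl' : forall x, a <= x <= b -> t * d <= Rabs (t * g1 x)).
  { intros x Hx; rewrite Rabs_mult, (Rabs_pos_eq t) by lra; apply Rmult_le_compat_l; [lra|auto]. }
  assert (Hnz : forall x, a <= x <= b -> t * g1 x <> 0).
  { intros x Hx E; specialize (Hl' x Hx); rewrite E, Rabs_R0 in Hl'; lra. }
  assert (Hg1 : forall x, a <= x <= b -> g1 x <> 0).
  { intros x Hx E; apply (Hnz x Hx); rewrite E; ring. }
  assert (Ht0 : t <> 0) by lra.
  destruct HD as [Hd1 Hd2].
  assert (Dg1 : forall x, is_derive (fun y => t * g1 y) x (t * g2 x)) by (intros; apply is_derive_scal; auto).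
  set (G := fun x => - / (t * g1 x)).
  set (dG := fun x => t * g2 x / (t * g1 x) ^ 2).
  assert (HG : forall x, a <= x <= b -> is_derive G x (dG x)).
  { intros x Hx. unfold G, dG. replace (t * g2 x / (t * g1 x) ^ 2) with (- (- (t * g2 x) / (t * g1 x) ^ 2)) by (field; repeat split; auto).
    apply (is_derive_neg (fun y => / (t * g1 y))). apply (is_derive_inv (fun y => t * g1 y)); auto. }
  assert (HGb : G b - G a <= 2 / (t * d)).
  { unfold G. pose proof (div_bound 1 (t * g1 a) (t * d) ltac:(rewrite Rabs_R1; lra) Htd (Hl' a ltac:(lra))).
    pose proof (div_bound 1 (t * g1 b) (t * d) ltac:(rewrite Rabs_R1; lra) Htd (Hl' b ltac:(lra))).
    unfold Rdiv in *; rewrite Rmult_1_l in *. apply Rabs_le_between in H; apply Rabs_le_between in H0. lra. }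
  assert (HdG : forall x, a <= x <= b -> 0 <= t * g2 x) by (intros; apply Rmult_le_pos; [lra|auto]).
  assert (Hsq : forall x, a <= x <= b -> 0 < (t * g1 x) ^ 2) by (intros; apply pow2_gt_0; auto).
  split.
  - set (fc := fun y => cos (t * g y)).
    set (F := fun x => RInt fc a x - sin (t * g x) / (t * g1 x)).
    set (dF := fun x => sin (t * g x) * (t * g2 x) / (t * g1 x) ^ 2).
    assert (HF : forall x, a <= x <= b -> is_derive F x (dF x)).
    { intros x Hx. unfold F.
      replace (dF x) with (fc x - (cos (t * g x) * (t * g1 x) * (t * g1 x) - sin (t * g x) * (t * g2 x)) / (t * g1 x) ^ 2).
      2:{ unfold dF, fc. field. repeat split; auto. }
      apply is_derive_minusR.
      - apply RInt_derive. intros; apply (cos_ex g g1 g2 t); split; auto.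
        apply (cos_cont g g1 g2 t); split; auto.
      - apply (is_derive_div (fun y => sin (t * g y)) (fun y => t * g1 y)); auto.
        apply (sin_der g g1 g2 t); split; auto. }
    assert (C := core F G dF dG a b Hab HF HG).
    assert (Hab' : Rabs (F b - F a) <= G b - G a).
    { apply C. intros x Hx. unfold dF, dG. unfold Rdiv. rewrite Rabs_mult, Rabs_mult.
      rewrite (Rabs_pos_eq (t * g2 x)) by auto. rewrite (Rabs_pos_eq (/ _)).
      2:{ left; apply Rinv_0_lt_compat; auto. }
      rewrite Rmult_assoc. pattern (t * g2 x * / (t * g1 x) ^ 2) at 2; rewrite <- Rmult_1_l.
      apply Rmult_le_compat_r. apply Rmult_le_pos; auto. left; apply Rinv_0_lt_compat; auto.
      apply Rabs_le; pose proof (SIN_bound (t * g x)); lra. }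
    unfold F in Hab'. rewrite RInt_aa in Hab'.
    pose proof (div_bound (sin (t * g a)) (t * g1 a) (t * d) ltac:(apply Rabs_le; apply SIN_bound) Htd (Hl' a ltac:(lra))).
    pose proof (div_bound (sin (t * g b)) (t * g1 b) (t * d) ltac:(apply Rabs_le; apply SIN_bound) Htd (Hl' b ltac:(lra))).
    apply Rabs_le_between in H; apply Rabs_le_between in H0; apply Rabs_le_between in Hab'.
    apply Rabs_le. unfold fc in *. unfold Rdiv in *. lra.
  - set (fc := fun y => sin (t * g y)).
    set (F := fun x => RInt fc a x + cos (t * g x) / (t * g1 x)).
    set (dF := fun x => - cos (t * g x) * (t * g2 x) / (t * g1 x) ^ 2).
    assert (HF : forall x, a <= x <= b -> is_derive F x (dF x)).
    { intros x Hx. unfold F.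
      replace (dF x) with (fc x + (- sin (t * g x) * (t * g1 x) * (t * g1 x) - cos (t * g x) * (t * g2 x)) / (t * g1 x) ^ 2).
      2:{ unfold dF, fc. field. repeat split; auto. }
      apply is_derive_plusR.
      - apply RInt_derive. intros; apply (sin_ex g g1 g2 t); split; auto.
        apply (sin_cont g g1 g2 t); split; auto.
      - apply (is_derive_div (fun y => cos (t * g y)) (fun y => t * g1 y)); auto.
        apply (cos_der g g1 g2 t); split; auto. }
    assert (C := core F G dF dG a b Hab HF HG).
    assert (Hab' : Rabs (F b - F a) <= G b - G a).
    { apply C. intros x Hx. unfold dF, dG. unfold Rdiv. rewrite Rabs_mult, Rabs_mult.
      rewrite (Rabs_pos_eq (t * g2 x)) by auto. rewrite (Rabs_pos_eq (/ _)).
      2:{ left; apply Rinv_0_lt_compat; auto. }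
      rewrite Rmult_assoc. pattern (t * g2 x * / (t * g1 x) ^ 2) at 2; rewrite <- Rmult_1_l.
      apply Rmult_le_compat_r. apply Rmult_le_pos; auto. left; apply Rinv_0_lt_compat; auto.
      apply Rabs_le; pose proof (COS_bound (t * g x)); lra. }
    unfold F in Hab'. rewrite RInt_aa in Hab'.
    pose proof (div_bound (cos (t * g a)) (t * g1 a) (t * d) ltac:(apply Rabs_le; apply COS_bound) Htd (Hl' a ltac:(lra))).
    pose proof (div_bound (cos (t * g b)) (t * g1 b) (t * d) ltac:(apply Rabs_le; apply COS_bound) Htd (Hl' b ltac:(lra))).
    apply Rabs_le_between in H; apply Rabs_le_between in H0; apply Rabs_le_between in Hab'.
    apply Rabs_le. unfold fc in *. unfold Rdiv in *. lra.
Qed.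


Lemma cont_shift g g1 g2 c : D2 g g1 g2 -> continuity (fun x => g1 x + c).
Proof.
  intros H x. apply continuity_pt_plus. apply (D2_contpt g g1 g2 H x). apply continuity_pt_const; intros u v; auto.
Qed.

Lemma L2 g g1 g2 a b t d L : D2 g g1 g2 -> a <= b -> 0 < t -> 0 < d -> 0 <= L ->
  (forall x, a <= x <= b -> 0 <= g2 x) ->
  (forall x y, a <= x -> x <= y -> y <= b -> g1 y - g1 x <= 2 * d -> y - x <= L) ->
  Bnd g a b t (L + 8 / (t * d)).
Proof.
  intros HD Hab Ht Hd HL Hp HLen.
  assert (Htd : 0 < t * d) by (apply Rmult_lt_0_compat; auto).
  assert (E8 : 8 / (t * d) = 4 / (t * d) + 4 / (t * d)) by (field; lra).
  assert (P4 : 0 < 4 / (t * d)) by (apply Rdiv_lt_0_compat; lra).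
  assert (Mo := mono1 g g1 g2 a b HD Hp).
  destruct (Rle_or_lt (g1 b) (- d)) as [Hb|Hb].
  { eapply Bnd_mono; [|apply (L1 g g1 g2 a b t d); auto]. lra.
    intros x Hx. pose proof (Mo x b ltac:(lra) ltac:(lra) ltac:(lra)). rewrite Rabs_left1 by lra. lra. }
  destruct (Rle_or_lt d (g1 a)) as [Ha|Ha].
  { eapply Bnd_mono; [|apply (L1 g g1 g2 a b t d); auto]. lra.
    intros x Hx. pose proof (Mo a x ltac:(lra) ltac:(lra) ltac:(lra)). rewrite Rabs_pos_eq by lra. lra. }
  assert (Halpha : exists al, a <= al <= b /\ - d <= g1 al < d /\ Bnd g a al t (4 / (t * d))).
  { destruct (Rle_or_lt (- d) (g1 a)) as [Ha2|Ha2].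
    - exists a; split; [lra|split; [lra|]]. eapply Bnd_mono; [|apply Bnd_point]. lra.
    - assert (Hab2 : a < b) by (destruct (Req_dec a b); [subst; lra|lra]).
      destruct (IVT (fun x => g1 x + d) a b (cont_shift g g1 g2 d HD) Hab2 ltac:(simpl; lra) ltac:(simpl; lra)) as [z [Hz Ez]].
      exists z; split; [lra|split; [lra|]].
      apply (L1 g g1 g2 a z t d); auto. lra. intros; apply Hp; lra.
      intros x Hx. pose proof (Mo x z ltac:(lra) ltac:(lra) ltac:(lra)). rewrite Rabs_left1 by lra. lra. }
  destruct Halpha as [al [Hal [Hgal Bal]]].
  assert (Hbeta : exists be, al <= be <= b /\ g1 be <= d /\ Bnd g be b t (4 / (t * d))).
  { destruct (Rle_or_lt (g1 b) d) as [Hb2|Hb2].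
    - exists b; split; [lra|split; [lra|]]. eapply Bnd_mono; [|apply Bnd_point]. lra.
    - assert (Hab2 : al < b) by (destruct (Req_dec al b); [subst; lra|lra]).
      destruct (IVT (fun x => g1 x + - d) al b (cont_shift g g1 g2 (- d) HD) Hab2 ltac:(simpl; lra) ltac:(simpl; lra)) as [z [Hz Ez]].
      exists z; split; [lra|split; [lra|]].
      apply (L1 g g1 g2 z b t d); auto. lra. intros; apply Hp; lra.
      intros x Hx. pose proof (Mo z x ltac:(lra) ltac:(lra) ltac:(lra)). rewrite Rabs_pos_eq by lra. lra. }
  destruct Hbeta as [be [Hbe [Hgbe Bbe]]].
  assert (Hlen : be - al <= L) by (apply HLen; lra).
  assert (B1 := Bnd_chasles g g1 g2 a al be t _ _ HD Bal (Bnd_triv g g1 g2 al be t HD ltac:(lra))).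
  assert (B2 := Bnd_chasles g g1 g2 a be b t _ _ HD B1 Bbe).
  eapply Bnd_mono; [|exact B2]. lra.
Qed.


Lemma rp_pos x y : 0 < Rpower x y.
Proof. unfold Rpower; apply exp_pos. Qed.

Lemma rpow_pos_eq x q : 0 < x -> rpow x q = Rpower x q.
Proof. intro H; unfold rpow; destruct (Req_EM_T x 0); [lra|auto]. Qed.

Lemma VdC2 g g1 g2 a b t lam : D2 g g1 g2 -> a <= b -> 0 < t -> 0 < lam ->
  (forall x, a <= x <= b -> lam <= g2 x) -> Bnd g a b t (10 / sqrt (lam * t)).
Proof.
  intros HD Hab Ht Hl Hg.
  set (s := sqrt (lam * t)).
  assert (Hs : 0 < s) by (apply sqrt_lt_R0; apply Rmult_lt_0_compat; auto).
  assert (Hss : s * s = lam * t) by (apply sqrt_sqrt; nra).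
  set (d := s / t).
  assert (Hd : 0 < d) by (apply Rdiv_lt_0_compat; auto).
  assert (B := L2 g g1 g2 a b t d (2 / s) HD Hab Ht Hd ltac:(left; apply Rdiv_lt_0_compat; lra)).
  eapply Bnd_mono; [|apply B].
  - replace (t * d) with s by (unfold d; field; lra).
    right; field; lra.
  - intros x Hx; pose proof (Hg x Hx); lra.
  - intros x y Hx Hxy Hy Hd2. destruct (mvt1 g g1 g2 HD x y Hxy) as [c [Hc E]].
    assert (lam <= g2 c) by (apply Hg; lra).
    assert (lam * (y - x) <= 2 * d) by nra.
    assert (Hyx : y - x <= 2 * d / lam).
    { apply (Rmult_le_reg_l lam); [auto|]. replace (lam * (2 * d / lam)) with (2 * d) by (field; lra). lra. }
    eapply Rle_trans; [exact Hyx|]. right. unfold d.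
    field_simplify_eq; [|lra]. replace (2 * t * lam) with (2 * (lam * t)) by ring. rewrite <- Hss; ring.
Qed.

Lemma rp_root w p K : 0 < w -> 0 < p -> 0 < K -> Rpower w p <= K -> w <= Rpower K (1 / p).
Proof.
  intros Hw Hp HK H.
  replace w with (Rpower (Rpower w p) (1 / p)).
  2:{ rewrite Rpower_mult. replace (p * (1 / p)) with 1 by (field; lra). apply Rpower_1; auto. }
  apply Rle_Rpower_l. left; apply Rdiv_lt_0_compat; lra. split; [apply rp_pos|auto].
Qed.

Lemma OUT_i g g1 g2 R0 C2 q2 : D2 g g1 g2 -> 0 < R0 -> 0 < C2 -> 0 <= q2 ->
  (forall x, R0 <= x -> C2 * Rpower x q2 <= g2 x) ->
  forall t b, 0 < t -> R0 <= b ->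
  Bnd g R0 b t ((2 * Rpower (2 / C2) (1 / (1 + q2)) + 8) * Rpower t (- (1 / (2 + q2)))).
Proof.
  intros HD HR HC Hq Hlow t b Ht Hb.
  set (p := 1 + q2). set (e := 2 + q2).
  assert (Hp : 0 < p) by (unfold p; lra). assert (He : 0 < e) by (unfold e; lra).
  set (d := Rpower t (- (p / e))).
  assert (Hd : 0 < d) by apply rp_pos.
  assert (B := L2 g g1 g2 R0 b t d (2 * Rpower (2 * d / C2) (1 / p)) HD Hb Ht Hd).
  eapply Bnd_mono; [|apply B].
  - right.
    replace (2 * d / C2) with ((2 / C2) * d) by (field; lra).
    rewrite <- Rpower_mult_distr by (try apply Rdiv_lt_0_compat; lra).
    unfold d at 1. rewrite Rpower_mult.
    replace (- (p / e) * (1 / p)) with (- (1 / e)) by (field; lra).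
    replace (t * d) with (Rpower t (1 / e)).
    2:{ unfold d. rewrite <- (Rpower_1 t) at 2 by auto. rewrite <- Rpower_plus. f_equal. unfold p, e; field; lra. }
    rewrite (Rpower_Ropp t (1 / e)). unfold e. field. apply Rgt_not_eq, rp_pos.
  - left; apply Rmult_lt_0_compat; [lra|apply rp_pos].
  - intros x Hx. apply Rle_trans with (C2 * Rpower x q2). apply Rmult_le_pos; [lra|left; apply rp_pos].
    apply Hlow; lra.
  - intros x y Hx Hxy Hy Hd2.
    destruct (Req_dec x y) as [Exy|Nxy].
    { subst; rewrite Rminus_diag. apply Rmult_le_pos; [lra|left; apply rp_pos]. }
    set (m := (x + y) / 2). set (w := (y - x) / 2).
    assert (Hw : 0 < w) by (unfold w; lra).
    assert (Hpos : forall z, R0 <= z <= b -> 0 <= g2 z).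
    { intros z Hz. apply Rle_trans with (C2 * Rpower z q2). apply Rmult_le_pos; [lra|left; apply rp_pos]. apply Hlow; lra. }
    assert (Mo := mono1 g g1 g2 R0 b HD Hpos x m Hx ltac:(unfold m; lra) ltac:(unfold m; lra)).
    destruct (mvt1 g g1 g2 HD m y ltac:(unfold m; lra)) as [c [Hc E]].
    assert (Hg2c : C2 * Rpower c q2 <= g2 c) by (apply Hlow; unfold m in Hc; lra).
    assert (Hcw : Rpower w q2 <= Rpower c q2).
    { apply Rle_Rpower_l; auto. unfold m, w in *; lra. }
    assert (Hym : y - m = w) by (unfold m, w; field).
    assert (Key : C2 * Rpower w p <= 2 * d).
    { unfold p. rewrite Rpower_plus, Rpower_1 by auto.
      assert (0 <= Rpower w q2) by (left; apply rp_pos).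
      assert (C2 * Rpower w q2 <= g2 c) by nra.
      rewrite Hym in E. nra. }
    assert (Hw2 : w <= Rpower (2 * d / C2) (1 / p)).
    { apply rp_root; auto. apply Rdiv_lt_0_compat; lra.
      apply (Rmult_le_reg_l C2); auto. replace (C2 * (2 * d / C2)) with (2 * d) by (field; lra). auto. }
    unfold w in Hw2; lra.
Qed.

Lemma OUT_tail g g1 g2 R0 lam : D2 g g1 g2 -> 0 < lam ->
  (forall x, R0 <= x -> lam <= g2 x) ->
  forall t eps, 0 < t -> 0 < eps -> exists M, R0 <= M /\
    forall b b', M <= b -> b <= b' -> Bnd g b b' t eps.
Proof.
  intros HD Hl Hlow t eps Ht He.
  set (d := 4 / (t * eps)).
  assert (Hd : 0 < d) by (unfold d; apply Rdiv_lt_0_compat; [lra|apply Rmult_lt_0_compat; auto]).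
  exists (R0 + (Rabs (g1 R0) + d) / lam); split.
  { assert (0 <= (Rabs (g1 R0) + d) / lam) by (apply Rdiv_le_0_compat; [pose proof (Rabs_pos (g1 R0)); lra|lra]). lra. }
  intros b b' Hb Hbb.
  assert (Hq : 0 <= (Rabs (g1 R0) + d) / lam) by (apply Rdiv_le_0_compat; [pose proof (Rabs_pos (g1 R0)); lra|lra]).
  assert (Bd := L1 g g1 g2 b b' t d HD Hbb Ht Hd).
  replace eps with (4 / (t * d)).
  2:{ unfold d. field. split; lra. }
  apply Bd.
  - intros x Hx. pose proof (Hlow x ltac:(lra)); lra.
  - intros x Hx. destruct (mvt1 g g1 g2 HD R0 x ltac:(lra)) as [c [Hc E]].
    assert (lam <= g2 c) by (apply Hlow; lra).
    assert (lam * (x - R0) <= g2 c * (x - R0)) by (apply Rmult_le_compat_r; lra).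
    assert (lam * (x - R0) >= Rabs (g1 R0) + d).
    { assert (x - R0 >= (Rabs (g1 R0) + d) / lam) by lra.
      apply Rle_ge. replace (Rabs (g1 R0) + d) with (lam * ((Rabs (g1 R0) + d) / lam)) by (field; lra).
      apply Rmult_le_compat_l; lra. }
    pose proof (Rle_abs (- g1 R0)). rewrite Rabs_Ropp in H2.
    rewrite Rabs_pos_eq; lra.
Qed.


Definition OUTconcl (g : R -> R) R0 q2 :=
  exists K1 K2, 0 <= K1 /\ 0 <= K2 /\
  (forall t b, 0 < t -> R0 <= b -> Bnd g R0 b t (K1 * Rpower t (- (1 / (2 + q2))))) /\
  (forall t b, 0 < t -> R0 <= b -> Bnd g R0 b t (K2 / sqrt t)) /\
  (forall t eps, 0 < t -> 0 < eps -> exists M, R0 <= M /\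
    forall b b', M <= b -> b <= b' -> Bnd g b b' t eps).

Lemma OUT_pos g g1 g2 R0 C2 q2 : D2 g g1 g2 -> 0 < R0 -> 0 < C2 -> 0 <= q2 ->
  (forall x, R0 <= x -> C2 * Rpower x q2 <= g2 x) -> OUTconcl g R0 q2.
Proof.
  intros HD HR HC Hq Hlow.
  set (lam := C2 * Rpower R0 q2).
  assert (Hl : 0 < lam) by (apply Rmult_lt_0_compat; [lra|apply rp_pos]).
  assert (Hlow2 : forall x, R0 <= x -> lam <= g2 x).
  { intros x Hx. eapply Rle_trans; [|apply Hlow; auto]. unfold lam. apply Rmult_le_compat_l; [lra|].
    apply Rle_Rpower_l; auto. }
  exists (2 * Rpower (2 / C2) (1 / (1 + q2)) + 8), (10 / sqrt lam).
  split. { pose proof (rp_pos (2 / C2) (1 / (1 + q2))); lra. }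
  split. { left; apply Rdiv_lt_0_compat; [lra|apply sqrt_lt_R0; auto]. }
  split. { intros; eapply OUT_i; eauto. }
  split.
  - intros t b Ht Hb. eapply Bnd_mono; [|apply (VdC2 g g1 g2 R0 b t lam); auto; intros; apply Hlow2; lra].
    rewrite sqrt_mult by lra. right; field.
    split; apply Rgt_not_eq; apply sqrt_lt_R0; auto.
  - intros; apply (OUT_tail g g1 g2 R0 lam); auto.
Qed.

Lemma OUT_all g g1 g2 R0 C2 q2 : D2 g g1 g2 -> 0 < R0 -> 0 < C2 -> 0 <= q2 ->
  (forall x, R0 <= x -> C2 * Rpower x q2 <= Rabs (g2 x)) -> OUTconcl g R0 q2.
Proof.
  intros HD HR HC Hq Hlow.
  assert (Hnz : forall x, R0 <= x -> g2 x <> 0).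
  { intros x Hx E. pose proof (Hlow x Hx). rewrite E, Rabs_R0 in H.
    pose proof (rp_pos x q2). nra. }
  assert (Hsg : (forall x, R0 <= x -> g2 x > 0) \/ (forall x, R0 <= x -> g2 x < 0)).
  { destruct HD as [H1 H2].
    destruct (Rlt_or_le 0 (g2 R0)) as [P|N].
    - left; intros x Hx. destruct (sign_const g1 g2 H2 R0 x Hx) as [A|A].
      intros; apply Hnz; lra. apply A; lra. pose proof (A R0 ltac:(lra)); lra.
    - right; intros x Hx. destruct (sign_const g1 g2 H2 R0 x Hx) as [A|A].
      intros; apply Hnz; lra. pose proof (A R0 ltac:(lra)); lra. apply A; lra. }
  destruct Hsg as [P|N].
  - apply (OUT_pos g g1 g2 R0 C2 q2); auto.
    intros x Hx; rewrite <- (Rabs_pos_eq (g2 x)); [apply Hlow; auto|left; apply P; auto].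
  - destruct (OUT_pos (fun x => - g x) (fun x => - g1 x) (fun x => - g2 x) R0 C2 q2) as [K1 [K2 [A [B [C [D E]]]]]]; auto.
    apply D2_neg; auto.
    intros x Hx; rewrite <- (Rabs_left (g2 x)); [apply Hlow; auto|apply N; auto].
    exists K1, K2; split; [auto|split; [auto|split; [|split]]].
    + intros t b Ht Hb; apply (Bnd_neg g g1 g2); auto.
    + intros t b Ht Hb; apply (Bnd_neg g g1 g2); auto.
    + intros t eps Ht He. destruct (E t eps Ht He) as [M [HM HM2]]. exists M; split; auto.
      intros b b' Hb Hbb; apply (Bnd_neg g g1 g2); auto.
Qed.


Definition Pt (g : R -> R) q1 a b :=
  exists C, forall t, 1 <= t -> Bnd g a b t (C * Rpower t (- (1 / (2 + q1)))).

Lemma Pt_pt g q1 a : Pt g q1 a a.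
Proof. exists 0; intros; eapply Bnd_mono; [|apply Bnd_point]. lra. Qed.

Lemma Pt_trans g g1 g2 q1 a b c : D2 g g1 g2 -> Pt g q1 a b -> Pt g q1 b c -> Pt g q1 a c.
Proof.
  intros HD [C1 H1] [C2 H2]; exists (C1 + C2); intros t Ht.
  eapply Bnd_mono; [|apply (Bnd_chasles g g1 g2 a b c t _ _ HD (H1 t Ht) (H2 t Ht))]. lra.
Qed.

Lemma Pt_neg g g1 g2 q1 a b : D2 g g1 g2 -> Pt (fun x => - g x) q1 a b -> Pt g q1 a b.
Proof. intros HD [C H]; exists C; intros; apply (Bnd_neg g g1 g2); auto. Qed.

Lemma Pt_reflect g g1 g2 q1 a b : D2 g g1 g2 -> Pt (fun x => g (- x)) q1 (- b) (- a) -> Pt g q1 a b.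
Proof. intros HD [C H]; exists C; intros; apply (Bnd_refl g g1 g2); auto. Qed.

Lemma creep (P : R -> R -> Prop) A B : A <= B -> (forall a, P a a) ->
  (forall a b c, a <= b -> b <= c -> P a b -> P b c -> P a c) ->
  (forall x0, A <= x0 <= B -> exists eps, 0 < eps /\ forall a b, A <= a -> a <= x0 -> x0 <= b -> b <= B ->
      x0 - eps < a -> b < x0 + eps -> P a b) ->
  P A B.
Proof.
  intros HAB Hr Ht Hl.
  set (E := fun x => A <= x <= B /\ P A x).
  destruct (completeness E) as [s [Hub Hlub]].
  { exists B; intros x [Hx _]; lra. }
  { exists A; split; [lra|auto]. }
  assert (HAs : A <= s) by (apply Hub; split; [lra|auto]).
  assert (HsB : s <= B) by (apply Hlub; intros x [Hx _]; lra).
  destruct (Hl s ltac:(lra)) as [eps [He Hloc]].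
  assert (Hx : exists x, E x /\ s - eps < x).
  { apply NNPP; intro N.
    assert (s <= s - eps); [|lra].
    apply Hlub; intros x Ex. destruct (Rle_or_lt x (s - eps)) as [|L]; auto.
    exfalso; apply N; exists x; auto. }
  destruct Hx as [x [[[Hx1 Hx1'] Hx2] Hx3]].
  assert (Hxs : x <= s) by (apply Hub; split; auto).
  set (s' := Rmin B (s + eps / 2)).
  assert (Hs'1 : s' <= B) by apply Rmin_l.
  assert (Hs'2 : s' <= s + eps / 2) by apply Rmin_r.
  assert (Hs'3 : s <= s') by (unfold s'; apply Rmin_glb; lra).
  assert (PAs' : P A s').
  { apply (Ht A x s'); [lra|lra|exact Hx2|apply Hloc; lra]. }
  assert (Hs's : s' <= s) by (apply Hub; split; [lra|auto]).
  assert (EB : s' = B).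
  { unfold s' in *. destruct (Rle_or_lt B (s + eps / 2)) as [L|L].
    rewrite Rmin_left; auto. rewrite Rmin_right in Hs's by lra. lra. }
  rewrite EB in PAs'; auto.
Qed.

Lemma near_lin (f : R -> R) x l : derivable_pt_lim f x l -> forall eps, 0 < eps ->
  exists del, 0 < del /\ forall z, Rabs (z - x) < del -> Rabs (f z - f x - l * (z - x)) <= eps * Rabs (z - x).
Proof.
  intros H eps He. destruct (H eps He) as [d Hd]. exists d; split; [apply cond_pos|].
  intros z Hz. destruct (Req_dec z x) as [E|N].
  { subst; replace (x - x) with 0 by ring; rewrite Rabs_R0. replace (f x - f x - l * 0) with 0 by ring. rewrite Rabs_R0; lra. }
  specialize (Hd (z - x) ltac:(lra) Hz). replace (x + (z - x)) with z in Hd by ring.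
  replace (f z - f x - l * (z - x)) with (((f z - f x) / (z - x) - l) * (z - x)) by (field; lra).
  rewrite Rabs_mult. apply Rmult_le_compat_r; [apply Rabs_pos|lra].
Qed.

Lemma list_sep (l : list R) x0 : exists rho, 0 < rho /\ forall z, In z l -> z <> x0 -> rho <= Rabs (z - x0).
Proof.
  induction l as [|z l IH].
  - exists 1; split; [lra|intros z []].
  - destruct IH as [r [Hr Hl]]. destruct (Req_dec z x0) as [E|N].
    + exists r; split; auto. intros z' [E'|I] Nz. subst; congruence. auto.
    + exists (Rmin r (Rabs (z - x0))); split.
      apply Rmin_pos; auto. apply Rabs_pos_lt; lra.
      intros z' [E'|I] Nz. subst; apply Rmin_r. eapply Rle_trans; [apply Rmin_l|auto].
Qed.

Definition gam (q1 : R) := 1 / (2 + q1).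

Lemma gam_pos (q1 : R) (Hq1 : 0 < q1) : 0 < (gam q1).
Proof. unfold gam; apply Rdiv_lt_0_compat; lra. Qed.
Lemma gam_half (q1 : R) (Hq1 : 0 < q1) : (gam q1) <= 1 / 2.
Proof. unfold gam. apply Rmult_le_compat_l; [lra|]. apply Rinv_le_contravar; lra. Qed.

Lemma r_le1 (q1 : R) (Hq1 : 0 < q1) t : 1 <= t -> Rpower t (- (gam q1)) <= 1.
Proof. intro Ht. rewrite <- (Rpower_O t) by lra. apply Rle_Rpower; auto. pose proof (gam_pos q1 Hq1); lra. Qed.

Lemma pw_eq1 (q1 : R) (Hq1 : 0 < q1) t : 0 < t -> Rpower (Rpower t (- (gam q1))) q1 * t = Rpower t (gam q1) * Rpower t (gam q1).
Proof.
  intro Ht. rewrite Rpower_mult. rewrite <- (Rpower_1 t) at 2 by auto.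
  rewrite <- !Rpower_plus. f_equal. unfold gam; field. lra.
Qed.

Lemma pw_eq2 (q1 : R) (Hq1 : 0 < q1) t : 0 < t -> t * Rpower t (- (gam q1)) = Rpower t (1 - (gam q1)).
Proof.
  intro Ht. rewrite <- (Rpower_1 t) at 1 by auto. rewrite <- Rpower_plus. f_equal; ring.
Qed.

Lemma inv_t_le (q1 : R) (Hq1 : 0 < q1) t : 1 <= t -> / t <= Rpower t (- (gam q1)).
Proof.
  intro Ht. replace (/ t) with (Rpower t (- (1))).
  apply Rle_Rpower; auto. pose proof (gam_half q1 Hq1); lra.
  rewrite Rpower_Ropp, Rpower_1; auto; lra.
Qed.

Lemma inv_tr_le (q1 : R) (Hq1 : 0 < q1) t : 1 <= t -> / (t * Rpower t (- (gam q1))) <= Rpower t (- (gam q1)).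
Proof.
  intro Ht. rewrite (pw_eq2 q1 Hq1) by lra. rewrite <- Rpower_Ropp.
  apply Rle_Rpower; auto. pose proof (gam_half q1 Hq1); lra.
Qed.

Lemma RLpos (q1 : R) (Hq1 : 0 < q1) g g1 g2 x0 e0 : D2 g g1 g2 -> 0 < e0 ->
  (forall z, x0 <= z <= x0 + e0 -> 0 <= g2 z) ->
  (g2 x0 = 0 -> exists a del, a > 0 /\ del > 0 /\ forall x, Rabs (x - x0) < del ->
       Rabs (g2 x) >= a * rpow (Rabs (x - x0)) q1) ->
  exists eps, 0 < eps /\ forall b, x0 <= b -> b < x0 + eps -> Pt g q1 x0 b.
Proof.
  intros HD He0 Hpos Hord.
  destruct (Req_dec (g2 x0) 0) as [Z|NZ].
  - destruct (Hord Z) as [a [del [Ha [Hdel Hlow]]]].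
    exists (Rmin e0 del); split; [apply Rmin_pos; lra|].
    intros b Hb1 Hb2. pose proof (Rmin_l e0 del); pose proof (Rmin_r e0 del).
    exists (1 + 10 / sqrt a). intros t Ht.
    fold (gam q1). set (r := Rpower t (- (gam q1))).
    assert (Hr : 0 < r) by apply rp_pos.
    assert (Hr1 : r <= 1) by (apply (r_le1 q1 Hq1); auto).
    assert (Hsa : 0 < sqrt a) by (apply sqrt_lt_R0; lra).
    assert (Hc : 0 <= 10 / sqrt a) by (left; apply Rdiv_lt_0_compat; lra).
    destruct (Rle_or_lt b (x0 + r)) as [Bs|Bl].
    + eapply Bnd_mono; [|apply (Bnd_triv g g1 g2 x0 b t HD Hb1)]. nra.
    + set (lam := a * Rpower r q1).
      assert (Hlam : 0 < lam) by (apply Rmult_lt_0_compat; [lra|apply rp_pos]).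
      assert (V := VdC2 g g1 g2 (x0 + r) b t lam HD ltac:(lra) ltac:(lra) Hlam).
      assert (V' : Bnd g (x0 + r) b t (10 / sqrt (lam * t))).
      { apply V. intros x Hx. specialize (Hlow x ltac:(rewrite Rabs_pos_eq; lra)).
        rewrite (Rabs_pos_eq (x - x0)) in Hlow by lra. rewrite (Rabs_pos_eq (g2 x)) in Hlow by (apply Hpos; lra).
        rewrite rpow_pos_eq in Hlow by lra.
        unfold lam. apply Rle_trans with (a * Rpower (x - x0) q1); [|lra].
        apply Rmult_le_compat_l; [lra|]. apply Rle_Rpower_l; lra. }
      assert (EQ : 10 / sqrt (lam * t) = 10 / sqrt a * r).
      { unfold lam, r. rewrite Rmult_assoc, (pw_eq1 q1 Hq1) by lra. rewrite sqrt_mult by (try lra; left; apply Rmult_lt_0_compat; apply rp_pos).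
        rewrite sqrt_square by (left; apply rp_pos). rewrite Rpower_Ropp. field.
        split; [apply Rgt_not_eq, rp_pos|lra]. }
      rewrite EQ in V'.
      assert (T := Bnd_triv g g1 g2 x0 (x0 + r) t HD ltac:(lra)).
      eapply Bnd_mono; [|apply (Bnd_chasles g g1 g2 x0 (x0 + r) b t _ _ HD T V')]. lra.
  - assert (P0 : g2 x0 > 0) by (pose proof (Hpos x0 ltac:(lra)); lra).
    destruct HD as [Hd1 Hd2] eqn:HDe.
    destruct (Req_dec (g1 x0) 0) as [Z1|NZ1].
    + destruct (near_lin g1 x0 (g2 x0) (proj1 (is_derive_Reals _ _ _) (Hd2 x0)) (g2 x0 / 2) ltac:(lra)) as [del [Hdel Hnl]].
      set (m := g2 x0 / 2).
      exists (Rmin e0 del); split; [apply Rmin_pos; lra|].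
      intros b Hb1 Hb2. pose proof (Rmin_l e0 del); pose proof (Rmin_r e0 del).
      exists (1 + 4 / m). intros t Ht.
      fold (gam q1). set (r := Rpower t (- (gam q1))).
      assert (Hr : 0 < r) by apply rp_pos.
      assert (Hr1 : r <= 1) by (apply (r_le1 q1 Hq1); auto).
      assert (Hm : 0 < m) by (unfold m; lra).
      assert (Hc : 0 <= 4 / m) by (left; apply Rdiv_lt_0_compat; lra).
      destruct (Rle_or_lt b (x0 + r)) as [Bs|Bl].
      * eapply Bnd_mono; [|apply (Bnd_triv g g1 g2 x0 b t HD Hb1)]. nra.
      * assert (Hmr : 0 < m * r) by nra.
        assert (L := L1 g g1 g2 (x0 + r) b t (m * r) HD ltac:(lra) ltac:(lra) Hmr).
        assert (L' : Bnd g (x0 + r) b t (4 / (t * (m * r)))).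
        { apply L. intros; apply Hpos; lra.
          intros x Hx. specialize (Hnl x ltac:(rewrite Rabs_pos_eq; lra)).
          rewrite Z1 in Hnl. rewrite (Rabs_pos_eq (x - x0)) in Hnl by lra.
          apply Rabs_le_between in Hnl. unfold m in *.
          assert (g2 x0 / 2 * r <= g2 x0 / 2 * (x - x0)) by (apply Rmult_le_compat_l; lra).
          rewrite Rabs_pos_eq; lra. }
        assert (EQ : 4 / (t * (m * r)) <= 4 / m * r).
        { replace (4 / (t * (m * r))) with (4 / m * / (t * r)) by (field; repeat split; lra).
          apply Rmult_le_compat_l; auto. apply (inv_tr_le q1 Hq1); auto. }
        assert (T := Bnd_triv g g1 g2 x0 (x0 + r) t HD ltac:(lra)).
        eapply Bnd_mono; [|apply (Bnd_chasles g g1 g2 x0 (x0 + r) b t _ _ HD T L')]. lra.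
    + set (l := g2 x0).
      set (d := Rabs (g1 x0) / 2).
      assert (Hd : 0 < d) by (unfold d; apply Rdiv_lt_0_compat; [apply Rabs_pos_lt; auto|lra]).
      destruct (near_lin g1 x0 l (proj1 (is_derive_Reals _ _ _) (Hd2 x0)) 1 ltac:(lra)) as [del [Hdel Hnl]].
      set (w := d / (Rabs l + 1)).
      assert (Hw : 0 < w) by (unfold w; apply Rdiv_lt_0_compat; [lra|pose proof (Rabs_pos l); lra]).
      exists (Rmin (Rmin e0 del) w); split; [apply Rmin_pos; [apply Rmin_pos|]; lra|].
      intros b Hb1 Hb2. pose proof (Rmin_l (Rmin e0 del) w); pose proof (Rmin_r (Rmin e0 del) w).
      pose proof (Rmin_l e0 del); pose proof (Rmin_r e0 del).
      exists (4 / d). intros t Ht.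
      assert (L := L1 g g1 g2 x0 b t d HD Hb1 ltac:(lra) Hd).
      eapply Bnd_mono; [|apply L].
      * replace (4 / (t * d)) with (4 / d * / t) by (field; lra).
        apply Rmult_le_compat_l; [left; apply Rdiv_lt_0_compat; lra|]. apply (inv_t_le q1 Hq1); auto.
      * intros; apply Hpos; lra.
      * intros x Hx. specialize (Hnl x ltac:(rewrite Rabs_pos_eq; lra)).
        rewrite (Rabs_pos_eq (x - x0)) in Hnl by lra.
        assert (Hlx : Rabs (l * (x - x0)) <= Rabs l * w).
        { rewrite Rabs_mult, (Rabs_pos_eq (x - x0)) by lra. apply Rmult_le_compat_l; [apply Rabs_pos|lra]. }
        assert (Hwl : (Rabs l + 1) * w = d) by (unfold w; field; pose proof (Rabs_pos l); lra).
        assert (Hdiff : Rabs (g1 x - g1 x0) <= d).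
        { replace (g1 x - g1 x0) with ((g1 x - g1 x0 - l * (x - x0)) + l * (x - x0)) by ring.
          eapply Rle_trans; [apply Rabs_triang|]. nra. }
        pose proof (Rabs_triang_inv (g1 x0) (g1 x0 - g1 x)).
        replace (g1 x0 - (g1 x0 - g1 x)) with (g1 x) in H3 by ring.
        rewrite Rabs_minus_sym in H3. unfold d in *. lra.
Qed.


Definition OrdAt (g2 : R -> R) q1 x0 := exists a del, a > 0 /\ del > 0 /\ forall x, Rabs (x - x0) < del ->
       Rabs (g2 x) >= a * rpow (Rabs (x - x0)) q1.

Lemma RL g g1 g2 q1 x0 : D2 g g1 g2 -> 0 < q1 ->
  (exists rho, 0 < rho /\ forall x, 0 < Rabs (x - x0) < rho -> g2 x <> 0) ->
  (g2 x0 = 0 -> OrdAt g2 q1 x0) ->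
  exists eps, 0 < eps /\ forall b, x0 <= b -> b < x0 + eps -> Pt g q1 x0 b.
Proof.
  intros HD Hq [rho [Hrho Hiso]] Hord.
  set (e0 := rho / 2).
  assert (He0 : 0 < e0) by (unfold e0; lra).
  assert (Hend : g2 (x0 + e0) <> 0).
  { apply Hiso. replace (x0 + e0 - x0) with e0 by ring. rewrite Rabs_pos_eq by lra. unfold e0; lra. }
  assert (Key : forall z, x0 <= z <= x0 + e0 -> g2 z = 0 \/
           (forall w, z <= w <= x0 + e0 -> g2 w <> 0)).
  { intros z Hz. destruct (Req_dec (g2 z) 0) as [E|N]; [left; auto|right].
    intros w Hw. destruct (Req_dec w x0) as [E|N2].
    - subst w. assert (z = x0) by lra. subst; auto.
    - apply Hiso. split. apply Rabs_pos_lt; lra. rewrite Rabs_pos_eq by lra. unfold e0 in *; lra. }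
  destruct HD as [H1 H2] eqn:HDe.
  assert (Sg : (forall z, x0 <= z <= x0 + e0 -> 0 <= g2 z) \/ (forall z, x0 <= z <= x0 + e0 -> g2 z <= 0)).
  { destruct (Rlt_or_le 0 (g2 (x0 + e0))) as [P|N].
    - left. intros z Hz. destruct (Key z Hz) as [E|A]; [lra|].
      destruct (sign_const g1 g2 H2 z (x0 + e0) ltac:(lra) A) as [B|B].
      left; apply B; lra. pose proof (B (x0 + e0) ltac:(lra)); lra.
    - right. intros z Hz. destruct (Key z Hz) as [E|A]; [lra|].
      destruct (sign_const g1 g2 H2 z (x0 + e0) ltac:(lra) A) as [B|B].
      pose proof (B (x0 + e0) ltac:(lra)); lra. left; apply B; lra. }
  destruct Sg as [P|N].
  - apply (RLpos q1 Hq g g1 g2 x0 e0 HD He0 P Hord).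
  - destruct (RLpos q1 Hq (fun x => - g x) (fun x => - g1 x) (fun x => - g2 x) x0 e0 (D2_neg _ _ _ HD) He0) as [eps [He Hb]].
    + intros z Hz; pose proof (N z Hz); lra.
    + intro E. assert (g2 x0 = 0) by lra. destruct (Hord H) as [a [del [Ha [Hd Hl]]]].
      exists a, del; repeat split; auto. intros x Hx. rewrite Rabs_Ropp; auto.
    + exists eps; split; auto. intros b Hb1 Hb2. apply (Pt_neg g g1 g2); auto.
Qed.

Lemma LL g g1 g2 q1 x0 : D2 g g1 g2 -> 0 < q1 ->
  (exists rho, 0 < rho /\ forall x, 0 < Rabs (x - x0) < rho -> g2 x <> 0) ->
  (g2 x0 = 0 -> OrdAt g2 q1 x0) ->
  exists eps, 0 < eps /\ forall a, a <= x0 -> x0 - eps < a -> Pt g q1 a x0.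
Proof.
  intros HD Hq [rho [Hrho Hiso]] Hord.
  destruct (RL (fun x => g (- x)) (fun x => - g1 (- x)) (fun x => g2 (- x)) q1 (- x0) (D2_refl _ _ _ HD) Hq) as [eps [He Hb]].
  - exists rho; split; auto. intros x Hx. apply Hiso.
    replace (- x - x0) with (- (x - - x0)) by ring. rewrite Rabs_Ropp; auto.
  - intro E. rewrite Ropp_involutive in E. destruct (Hord E) as [a [del [Ha [Hd Hl]]]].
    exists a, del; repeat split; auto. intros x Hx.
    replace (x - - x0) with (- (- x - x0)) by ring. rewrite Rabs_Ropp.
    apply Hl. replace (- x - x0) with (- (x - - x0)) by ring. rewrite Rabs_Ropp; auto.
  - exists eps; split; auto. intros a Ha1 Ha2.
    apply (Pt_reflect g g1 g2); auto. apply Hb; lra.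
Qed.

Lemma Middle g g1 g2 q1 A B : D2 g g1 g2 -> 0 < q1 -> A <= B ->
  (forall x0, exists rho, 0 < rho /\ forall x, 0 < Rabs (x - x0) < rho -> g2 x <> 0) ->
  (forall x0, g2 x0 = 0 -> OrdAt g2 q1 x0) ->
  Pt g q1 A B.
Proof.
  intros HD Hq HAB Hiso Hord.
  apply creep; auto.
  - intros; apply Pt_pt.
  - intros a b c _ _; apply (Pt_trans g g1 g2); auto.
  - intros x0 Hx0.
    destruct (RL g g1 g2 q1 x0 HD Hq (Hiso x0) (Hord x0)) as [e1 [He1 H1]].
    destruct (LL g g1 g2 q1 x0 HD Hq (Hiso x0) (Hord x0)) as [e2 [He2 H2]].
    exists (Rmin e1 e2); split; [apply Rmin_pos; auto|].
    intros a b _ Ha Hb _ Ha2 Hb2. pose proof (Rmin_l e1 e2); pose proof (Rmin_r e1 e2).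
    apply (Pt_trans g g1 g2 q1 a x0 b HD). apply H2; lra. apply H1; lra.
Qed.


Lemma RInt_swapR (f : R -> R) a b : ex_RInt f a b -> RInt f b a = - RInt f a b.
Proof. intro H; rewrite <- (opp_RInt_swap (V:=R_CompleteNormedModule) f a b H); reflexivity. Qed.

Lemma ChasR (f : R -> R) a b c : (forall u v, ex_RInt f u v) -> RInt f a c = RInt f a b + RInt f b c.
Proof. intro H; rewrite <- (RInt_Chasles (V:=R_CompleteNormedModule) f a b c); auto. Qed.

Lemma IMP (f : R -> R) R0 B : (forall u v, ex_RInt f u v) ->
  (forall eps, 0 < eps -> exists M, R0 <= M /\ forall b b', M <= b -> b <= b' ->
       Rabs (RInt f b b') <= eps /\ Rabs (RInt f (- b') (- b)) <= eps) ->
  (forall a b, R0 <= a -> R0 <= b -> Rabs (RInt f (- a) b) <= B) ->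
  exists I, improper_integral_R f I /\ Rabs I <= B.
Proof.
  intros Hex Htail Hbd.
  assert (T2 : forall eps, 0 < eps -> exists M, R0 <= M /\ forall x y, M <= x -> M <= y ->
       Rabs (RInt f x y) <= eps /\ Rabs (RInt f (- x) (- y)) <= eps).
  { intros eps He. destruct (Htail eps He) as [M [HM Ht]]. exists M; split; auto.
    intros x y Hx Hy. destruct (Rle_or_lt x y) as [L|L].
    - destruct (Ht x y Hx L) as [A1 A2]. split; auto.
      rewrite RInt_swapR by auto. rewrite Rabs_Ropp; auto.
    - destruct (Ht y x Hy ltac:(lra)) as [A1 A2]. split.
      rewrite RInt_swapR by auto. rewrite Rabs_Ropp; auto. auto. }
  assert (Dif : forall eps, 0 < eps -> exists M, R0 <= M /\ forall a b a' b', M <= a -> M <= b -> M <= a' -> M <= b' ->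
       Rabs (RInt f (- a) b - RInt f (- a') b') <= 2 * eps).
  { intros eps He. destruct (T2 eps He) as [M [HM Ht]]. exists M; split; auto.
    intros a b a' b' Ha Hb Ha' Hb'.
    rewrite (ChasR f (- a) (- a') b) by auto. rewrite (ChasR f (- a') b' b) by auto.
    replace (RInt f (- a) (- a') + (RInt f (- a') b' + RInt f b' b) - RInt f (- a') b')
      with (RInt f (- a) (- a') + RInt f b' b) by ring.
    eapply Rle_trans; [apply Rabs_triang|].
    destruct (Ht a a' Ha Ha') as [_ A]. destruct (Ht b' b Hb' Hb) as [B1 _]. lra. }
  set (u := fun n => RInt f (- INR n) (INR n) : R).
  assert (Cu : Cauchy_crit u).
  { intros eps He. destruct (Dif (eps / 4) ltac:(lra)) as [M [HM HD]].
    destruct (INR_unbounded M) as [N HN]. exists N. intros n m Hn Hm.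
    apply le_INR in Hn; apply le_INR in Hm. unfold R_dist, u.
    eapply Rle_lt_trans; [apply HD; lra|lra]. }
  destruct (Rcomplete.R_complete u Cu) as [I HI].
  exists I; split.
  - intros eps He. destruct (Dif (eps / 4) ltac:(lra)) as [M [HM HD]].
    exists M. intros a b Ha Hb.
    exists (RInt f (- a) b); split.
    + exists (ex_RInt_Reals_0 f (- a) b (Hex _ _)). symmetry; apply RInt_Reals.
    + destruct (HI (eps / 4) ltac:(lra)) as [N1 HN1].
      destruct (INR_unbounded M) as [N2 HN2].
      set (n := max N1 N2).
      assert (Hn1 : (n >= N1)%nat) by (unfold n; lia).
      assert (Hn2 : INR N2 <= INR n) by (apply le_INR; unfold n; lia).
      specialize (HN1 n Hn1). unfold R_dist in HN1.
      assert (Rabs (RInt f (- a) b - u n) <= 2 * (eps / 4)) by (unfold u; apply HD; lra).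
      replace (RInt f (- a) b - I) with ((RInt f (- a) b - u n) + (u n - I)) by ring.
      eapply Rle_lt_trans; [apply Rabs_triang|lra].
  - apply Rnot_lt_le; intro Hc.
    destruct (HI (Rabs I - B) ltac:(lra)) as [N1 HN1].
    destruct (INR_unbounded R0) as [N2 HN2].
    set (n := max N1 N2).
    assert (Hn1 : (n >= N1)%nat) by (unfold n; lia).
    assert (Hn2 : INR N2 <= INR n) by (apply le_INR; unfold n; lia).
    specialize (HN1 n Hn1). unfold R_dist in HN1.
    assert (Rabs (u n) <= B) by (unfold u; apply Hbd; lra).
    pose proof (Rabs_triang_inv I (I - u n)). replace (I - (I - u n)) with (u n) in H0 by ring.
    rewrite Rabs_minus_sym in HN1. lra.
Qed.

Lemma sqrt_sum_le x y : sqrt (x ^ 2 + y ^ 2) <= Rabs x + Rabs y.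
Proof.
  rewrite <- (sqrt_pow2 (Rabs x + Rabs y)) by (pose proof (Rabs_pos x); pose proof (Rabs_pos y); lra).
  apply sqrt_le_1_alt. rewrite <- (pow2_abs x), <- (pow2_abs y).
  pose proof (Rabs_pos x); pose proof (Rabs_pos y). nra.
Qed.

Lemma rp_ge1 t g : 0 < t < 1 -> 0 <= g -> 1 <= Rpower t (- g).
Proof.
  intros Ht Hg. unfold Rpower. rewrite <- exp_0.
  assert (ln t < 0) by (rewrite <- ln_1; apply ln_increasing; lra).
  destruct (Req_dec g 0) as [E|N]. subst; rewrite Ropp_0, Rmult_0_l; lra.
  left; apply exp_increasing. nra.
Qed.

Lemma inv_sqrt_le t q : 1 <= t -> 0 < q -> / sqrt t <= Rpower t (- (1 / (2 + q))).
Proof.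
  intros Ht Hq. rewrite <- Rpower_sqrt by lra. rewrite <- Rpower_Ropp.
  apply Rle_Rpower; auto. apply Ropp_le_contravar.
  replace (/ 2) with (1 / 2) by field. apply Rmult_le_compat_l; [lra|]. apply Rinv_le_contravar; lra.
Qed.


Theorem mainTheorem8 (h h1 h2 : R -> R) (zs : list R) (q1 q2 C1 C2 : R)
  (Hd1 : forall x, derivable_pt_lim h x (h1 x))
  (Hd2 : forall x, derivable_pt_lim h1 x (h2 x))
  (Hzs_nodup : NoDup zs)
  (Hzs : forall x, h2 x = 0 <-> In x zs)
  (Hq1 : q1 > 0)
  (Hord : forall xi, In xi zs -> exists a delta, a > 0 /\ delta > 0 /\
     forall x, Rabs (x - xi) < delta -> Rabs (h2 x) >= a * rpow (Rabs (x - xi)) q1)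
  (HC1 : C1 > 0) (HC2 : C2 > 0) (Hq2 : q2 >= 0)
  (Hinf : forall x, Rabs x >= C1 -> Rabs (h2 x) >= C2 * rpow (Rabs x) q2) :
  exists C,
    (forall t, 0 < t < 1 -> osc_integral_bound h t (C * Rpower t (- (1 / (2 + q2))))) /\
    (forall t, t >= 1 -> osc_integral_bound h t (C * Rpower t (- (1 / (2 + q1))))).
Proof.
  assert (HD := D2_of h h1 h2 Hd1 Hd2).
  set (R0 := C1).
  assert (HR : 0 < R0) by (unfold R0; lra).
  destruct (OUT_all h h1 h2 R0 C2 q2 HD HR HC2 ltac:(lra)) as [K1R [K2R [P1R [P2R [BR1 [BR2 TR]]]]]].
  { intros x Hx. pose proof (Hinf x ltac:(rewrite Rabs_pos_eq; unfold R0 in *; lra)).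
    rewrite (Rabs_pos_eq x) in H by lra. rewrite rpow_pos_eq in H by lra. lra. }
  destruct (OUT_all (fun x => h (- x)) (fun x => - h1 (- x)) (fun x => h2 (- x)) R0 C2 q2 (D2_refl _ _ _ HD) HR HC2 ltac:(lra))
    as [K1L [K2L [P1L [P2L [BL1 [BL2 TL]]]]]].
  { intros x Hx. pose proof (Hinf (- x) ltac:(rewrite Rabs_Ropp, Rabs_pos_eq; unfold R0 in *; lra)).
    rewrite Rabs_Ropp, (Rabs_pos_eq x) in H by lra. rewrite rpow_pos_eq in H by lra. lra. }
  destruct (Middle h h1 h2 q1 (- R0) R0 HD Hq1 ltac:(lra)) as [Cm HCm].
  { intro x0. destruct (list_sep zs x0) as [rho [Hrho Hs]]. exists rho; split; auto.
    intros x [Hx1 Hx2] E. apply Hzs in E. assert (x <> x0) by (intro; subst; rewrite Rminus_diag, Rabs_R0 in Hx1; lra).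
    specialize (Hs x E H). lra. }
  { intros x0 E. apply Hzs in E. apply Hord; auto. }
  assert (BLh1 : forall t a, 0 < t -> R0 <= a -> Bnd h (- a) (- R0) t (K1L * Rpower t (- (1 / (2 + q2))))).
  { intros t a Ht Ha. apply (Bnd_refl h h1 h2); auto. rewrite !Ropp_involutive. apply BL1; auto. }
  assert (BLh2 : forall t a, 0 < t -> R0 <= a -> Bnd h (- a) (- R0) t (K2L / sqrt t)).
  { intros t a Ht Ha. apply (Bnd_refl h h1 h2); auto. rewrite !Ropp_involutive. apply BL2; auto. }
  assert (Conv : forall t B, 0 < t -> (forall a b, R0 <= a -> R0 <= b -> Bnd h (- a) b t B) ->
            osc_integral_bound h t (2 * B)).
  { intros t B Ht HB.
    assert (Tl : forall eps, 0 < eps -> exists M, R0 <= M /\ forall b b', M <= b -> b <= b' ->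
                 Bnd h b b' t eps /\ Bnd h (- b') (- b) t eps).
    { intros eps He. destruct (TR t eps Ht He) as [M1 [HM1 H1]]. destruct (TL t eps Ht He) as [M2 [HM2 H2]].
      exists (Rmax M1 M2); split. eapply Rle_trans; [exact HM1|apply Rmax_l].
      intros b b' Hb Hbb. pose proof (Rmax_l M1 M2); pose proof (Rmax_r M1 M2). split.
      apply H1; lra. apply (Bnd_refl h h1 h2); auto. rewrite !Ropp_involutive. apply H2; lra. }
    destruct (IMP (fun x => cos (t * h x)) R0 B) as [Ic [HIc HIcB]].
    { intros; apply (cos_ex h h1 h2 t HD). }
    { intros eps He. destruct (Tl eps He) as [M [HM HT]]. exists M; split; auto.
      intros b b' Hb Hbb. destruct (HT b b' Hb Hbb) as [[A _] [B' _]]. split; auto. }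
    { intros a b Ha Hb. apply (HB a b Ha Hb). }
    destruct (IMP (fun x => sin (t * h x)) R0 B) as [Is [HIs HIsB]].
    { intros; apply (sin_ex h h1 h2 t HD). }
    { intros eps He. destruct (Tl eps He) as [M [HM HT]]. exists M; split; auto.
      intros b b' Hb Hbb. destruct (HT b b' Hb Hbb) as [[_ A] [_ B']]. split; auto. }
    { intros a b Ha Hb. apply (HB a b Ha Hb). }
    exists Ic, Is; split; [auto|split; [auto|]].
    eapply Rle_trans; [apply sqrt_sum_le|lra]. }
  assert (Dec : forall t a b X Y Z, 0 < t -> R0 <= a -> R0 <= b ->
            Bnd h (- a) (- R0) t X -> Bnd h (- R0) R0 t Y -> Bnd h R0 b t Z -> Bnd h (- a) b t (X + Y + Z)).
  { intros t a b X Y Z Ht Ha Hb A1 A2 A3.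
    apply (Bnd_chasles h h1 h2 (- a) R0 b t _ _ HD); auto.
    apply (Bnd_chasles h h1 h2 (- a) (- R0) R0 t _ _ HD); auto. }
  set (C := 2 * (K1R + K1L + 2 * R0 + K2R + K2L + Rabs Cm)).
  exists C; split.
  - intros t Ht.
    set (r := Rpower t (- (1 / (2 + q2)))).
    assert (Hr : 1 <= r) by (apply rp_ge1; auto; left; apply Rdiv_lt_0_compat; lra).
    replace (C * r) with (2 * ((K1R + K1L + 2 * R0 + K2R + K2L + Rabs Cm) * r)) by (unfold C; ring).
    apply Conv; [lra|]. intros a b Ha Hb.
    eapply Bnd_mono; [|apply (Dec t a b _ _ _ ltac:(lra) Ha Hb (BLh1 t a ltac:(lra) Ha)
                               (Bnd_triv h h1 h2 (- R0) R0 t HD ltac:(lra)) (BR1 t b ltac:(lra) Hb))].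
    pose proof (Rabs_pos Cm). fold r. nra.
  - intros t Ht.
    set (r := Rpower t (- (1 / (2 + q1)))).
    assert (Hr : 0 < r) by apply rp_pos.
    assert (Hs : / sqrt t <= r) by (apply inv_sqrt_le; lra).
    replace (C * r) with (2 * ((K1R + K1L + 2 * R0 + K2R + K2L + Rabs Cm) * r)) by (unfold C; ring).
    apply Conv; [lra|]. intros a b Ha Hb.
    eapply Bnd_mono; [|apply (Dec t a b _ _ _ ltac:(lra) Ha Hb (BLh2 t a ltac:(lra) Ha)
                               (HCm t ltac:(lra)) (BR2 t b ltac:(lra) Hb))].
    fold r. pose proof (Rabs_pos Cm). pose proof (Rle_abs Cm).
    unfold Rdiv. 
    assert (K2L * / sqrt t <= K2L * r) by (apply Rmult_le_compat_l; auto).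
    assert (K2R * / sqrt t <= K2R * r) by (apply Rmult_le_compat_l; auto).
    assert (Cm * r <= Rabs Cm * r) by (apply Rmult_le_compat_r; lra).
    nra.
Qed.
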